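(* Let $P$ be a finite graded poset of rank $r$ (all maximal chains have length $r$) such that $J(P)$ is tCDE. Then \[\mathbb{E}(\mathrm{uni}_{J(P)};\mathrm{ddeg})=\frac{\#P}{r+2}.\]
   Context: $J(P)$ is the poset of order ideals of $P$ ordered by inclusion; $\mathrm{ddeg}(I)$ is the number of elements of $J(P)$ covered by $I$ (equivalently $\#\max(I)$); $\mathrm{uni}_{J(P)}$ is uniform; $\mathbb{E}(\mu;f)=\sum_I f(I)\mathbb{P}(\mu;I)$. $\mathcal{T}^+_p(I)=1$ iff $p\notin I$ and $p$ is minimal in $P\setminus I$; $\mathcal{T}^-_p(I)=1$ iff $p\in I$ and $p$ is maximal in $I$ (else $0$). $\mu$ is toggle-symmetric if $\mathbb{E}(\mu;\mathcal{T}^+_p)=\mathbb{E}(\mu;\mathcal{T}^-_p)$ for all $p\in P$. $J(P)$ is tCDE if $\mathbb{E}(\mu;\mathrm{ddeg})=\mathbb{E}(\mathrm{uni}_{J(P)};\mathrm{ddeg})$ for every toggle-symmetric distribution $\mu$ on $J(P)$. *)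

(* Defs.v *)
From HB Require Import structures.
From mathcomp Require Import all_boot all_order all_algebra.
Set Implicit Arguments. Unset Strict Implicit. Unset Printing Implicit Defensive.
Import Order.TTheory GRing.Theory Num.Theory.

Local Open Scope order_scope.

Section Defs.
Variables (d : Order.disp_t) (P : finPOrderType d).

Definition is_chain (C : {set P}) : bool :=
  [forall x in C, forall y in C, (x <= y) || (y <= x)].

Definition is_max_chain (C : {set P}) : bool :=
  is_chain C && [forall D : {set P}, is_chain D ==> (C \subset D) ==> (D == C)].

(* graded of rank r: every maximal chain has length r, i.e. r+1 elements *)
Definition graded_rank (r : nat) : Prop :=
  forall C : {set P}, is_max_chain C -> #|C| = r.+1.

Definition order_ideal (I : {set P}) : bool :=
  [forall x in I, forall y : P, (y <= x) ==> (y \in I)].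

Definition ddeg (I : {set P}) : nat :=
  #|[set K : {set P} | order_ideal K && (K \proper I) &&
      [forall L : {set P}, (order_ideal L && (K \proper L) && (L \proper I)) ==> false]]|.

Definition togp (p : P) (I : {set P}) : bool :=
  (p \notin I) && [forall q : P, (q < p) ==> (q \in I)].
Definition togm (p : P) (I : {set P}) : bool :=
  (p \in I) && [forall q : P, (p < q) ==> (q \notin I)].

Local Open Scope ring_scope.
Variable R : realFieldType.

Definition expect (mu : {set P} -> R) (f : {set P} -> R) : R :=
  \sum_(I : {set P} | order_ideal I) f I * mu I.

(* probability distributions on J(P) (values outside J(P) are irrelevant) *)
Definition is_distr (mu : {set P} -> R) : Prop :=
  (forall I, order_ideal I -> 0 <= mu I) /\
  \sum_(I : {set P} | order_ideal I) mu I = 1.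

Definition uni : {set P} -> R :=
  fun _ => (#|[set I : {set P} | order_ideal I]|%:R)^-1.

Definition toggle_symmetric (mu : {set P} -> R) : Prop :=
  forall p : P, expect mu (fun I => (togp p I)%:R) = expect mu (fun I => (togm p I)%:R).

Definition tCDE : Prop :=
  forall mu, is_distr mu -> toggle_symmetric mu ->
    expect mu (fun I => (ddeg I)%:R) = expect uni (fun I => (ddeg I)%:R).
End Defs.

(* Main.v *)
Require Import Defs.
From HB Require Import structures.
From mathcomp Require Import all_boot all_order all_algebra zify.
Import Order.TTheory GRing.Theory Num.Theory.
Set Implicit Arguments. Unset Strict Implicit. Unset Printing Implicit Defensive.

Section Comb.
Variables (d : Order.disp_t) (P : finPOrderType d) (r : nat).
Hypothesis hgr : graded_rank P r.

Lemma chainP (C : {set P}) :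
  reflect (forall x y, x \in C -> y \in C -> (x <= y)%O || (y <= x)%O) (is_chain C).
Proof.
apply: (iffP forall_inP) => [h x y xC yC | h x xC].
  exact: (forall_inP (h x xC)).
by apply/forall_inP => y yC; exact: h.
Qed.

Lemma chain_sub (C D : {set P}) : C \subset D -> is_chain D -> is_chain C.
Proof.
move=> sCD /chainP h; apply/chainP => x y xC yC.
by apply: h; apply: (subsetP sCD).
Qed.

Lemma chain_ext (C : {set P}) : is_chain C ->
  exists M : {set P}, [/\ C \subset M, is_chain M & #|M| = r.+1].
Proof.
move=> hC.
have hC' : (fun D : {set P} => is_chain D && (C \subset D)) C by rewrite /= hC subxx.
case: (@arg_maxnP _ C (fun D : {set P} => is_chain D && (C \subset D)) (fun D : {set P} => #|D|) hC') => M /andP[chM sCM] Mmax.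
exists M; split => //; apply: hgr; rewrite /is_max_chain chM /=.
apply/forallP => D; apply/implyP => chD; apply/implyP => sMD.
rewrite eq_sym eqEcard sMD /=; apply: Mmax.
by rewrite chD (subset_trans sCM sMD).
Qed.

Lemma chain_bound (C : {set P}) : is_chain C -> #|C| <= r.+1.
Proof.
by case/chain_ext => M [sCM _ <-]; apply: subset_leq_card.
Qed.

Definition below (p : P) (C : {set P}) :=
  is_chain C && (p \in C) && [forall x in C, (x <= p)%O].
Definition above (p : P) (C : {set P}) :=
  is_chain C && (p \in C) && [forall x in C, (p <= x)%O].
Definition H p := \max_(C | below p C) #|C|.
Definition Dp p := \max_(C | above p C) #|C|.

Lemma chain1 (p : P) : is_chain [set p].
Proof. by apply/chainP => x y /set1P -> /set1P ->; rewrite lexx. Qed.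

Lemma below1 p : below p [set p].
Proof.
rewrite /below chain1 set11 /=; apply/forall_inP => x /set1P ->; exact: lexx.
Qed.
Lemma above1 p : above p [set p].
Proof.
rewrite /above chain1 set11 /=; apply/forall_inP => x /set1P ->; exact: lexx.
Qed.

Lemma H_ge C p : below p C -> #|C| <= H p.
Proof. exact: (@leq_bigmax_cond _ (below p) (fun C => #|C|)). Qed.
Lemma D_ge C p : above p C -> #|C| <= Dp p.
Proof. exact: (@leq_bigmax_cond _ (above p) (fun C => #|C|)). Qed.

Lemma H_wit p : exists2 C, below p C & H p = #|C|.
Proof.
have : 0 < #|[pred C | below p C]|.
  by apply/card_gt0P; exists [set p]; rewrite inE below1.
move/(@eq_bigmax_cond _ _ (fun C : {set P} => #|C|)) => [C HC eqC].
by exists C => //; rewrite /H -eqC.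
Qed.
Lemma D_wit p : exists2 C, above p C & Dp p = #|C|.
Proof.
have : 0 < #|[pred C | above p C]|.
  by apply/card_gt0P; exists [set p]; rewrite inE above1.
move/(@eq_bigmax_cond _ _ (fun C : {set P} => #|C|)) => [C HC eqC].
by exists C => //; rewrite /Dp -eqC.
Qed.

Lemma H_gt0 p : 0 < H p.
Proof. by have := H_ge (below1 p); rewrite cards1. Qed.
Lemma D_gt0 p : 0 < Dp p.
Proof. by have := D_ge (above1 p); rewrite cards1. Qed.

Lemma H_strict p q : (q < p)%O -> H q < H p.
Proof.
move=> qp; case: (H_wit q) => C /andP[/andP[chC qC] /forall_inP Cq] ->.
have pC : p \notin C.
  apply/negP => /Cq pq; by move: (lt_le_trans qp pq); rewrite ltxx.
have -> : #|C|.+1 = #|p |: C| by rewrite cardsU1 pC.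
apply: H_ge; rewrite /below setU11 andbT.
have le_p : forall x, x \in p |: C -> (x <= p)%O.
  move=> x /setU1P [-> | /Cq xq]; first exact: lexx.
  exact: le_trans xq (ltW qp).
apply/andP; split; last by apply/forall_inP.
apply/chainP => x y /setU1P [-> | xC] /setU1P [-> | yC].
- by rewrite lexx.
- by rewrite (le_trans (Cq _ yC) (ltW qp)) orbT.
- by rewrite (le_trans (Cq _ xC) (ltW qp)).
- by move/chainP: chC; apply.
Qed.

Lemma D_strict p q : (p < q)%O -> Dp q < Dp p.
Proof.
move=> qp; case: (D_wit q) => C /andP[/andP[chC qC] /forall_inP Cq] ->.
have pC : p \notin C.
  apply/negP => /Cq pq; by move: (lt_le_trans qp pq); rewrite ltxx.
have -> : #|C|.+1 = #|p |: C| by rewrite cardsU1 pC.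
apply: D_ge; rewrite /above setU11 andbT.
have le_p : forall x, x \in p |: C -> (p <= x)%O.
  move=> x /setU1P [-> | /Cq xq]; first exact: lexx.
  exact: le_trans (ltW qp) xq.
apply/andP; split; last by apply/forall_inP.
apply/chainP => x y /setU1P [-> | xC] /setU1P [-> | yC].
- by rewrite lexx.
- by rewrite (le_trans (ltW qp) (Cq _ yC)).
- by rewrite (le_trans (ltW qp) (Cq _ xC)) orbT.
- by move/chainP: chC; apply.
Qed.

Lemma HD p : H p + Dp p = r.+2.
Proof.
apply/eqP; rewrite eqn_leq; apply/andP; split.
  case: (H_wit p) => C /andP[/andP[chC pC] /forall_inP Cp] ->.
  case: (D_wit p) => E /andP[/andP[chE pE] /forall_inP Ep] ->.
  have chU : is_chain (C :|: E).
    apply/chainP => x y /setUP [xC|xE] /setUP [yC|yE].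
    - by move/chainP: chC; apply.
    - by rewrite (le_trans (Cp _ xC) (Ep _ yE)).
    - by rewrite (le_trans (Cp _ yC) (Ep _ xE)) orbT.
    - by move/chainP: chE; apply.
  have sI : C :&: E \subset [set p].
    apply/subsetP => x /setIP [xC xE]; rewrite inE; apply/eqP.
    by apply: le_anti; rewrite Cp ?Ep.
  have := subset_leq_card sI; rewrite cards1 => hI.
  have := chain_bound chU; rewrite -ltnS => hU.
  rewrite -cardsUI; apply: leq_trans (_ : #|C :|: E| + 1 <= _); first by rewrite leq_add2l.
  by rewrite addn1.
case: (chain_ext (chain1 p)) => M [sM chM cM].
have pM : p \in M by apply: (subsetP sM); rewrite set11.
set A := [set x in M | (x <= p)%O]; set B := [set x in M | (p <= x)%O].
have bA : below p A.
  rewrite /below /A (chain_sub _ chM) ?inE ?pM ?lexx //=; last first.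
    by apply/subsetP => x; rewrite inE => /andP[].
  by apply/forall_inP => x; rewrite inE => /andP[].
have bB : above p B.
  rewrite /above /B (chain_sub _ chM) ?inE ?pM ?lexx //=; last first.
    by apply/subsetP => x; rewrite inE => /andP[].
  by apply/forall_inP => x; rewrite inE => /andP[].
have sMU : M \subset A :|: B.
  apply/subsetP => x xM; rewrite !inE xM /=.
  by move/chainP: chM => /(_ x p xM pM).
have pI : p \in A :&: B by rewrite !inE pM lexx.
have h1 := subset_leq_card sMU.
have h2 : 0 < #|A :&: B| by apply/card_gt0P; exists p.
have h3 := cardsUI A B.
have h4 := H_ge bA; have h5 := D_ge bB.
rewrite -cM; apply: leq_trans (leq_add h4 h5).
rewrite -h3; apply: leq_trans (_ : #|A :|: B| + 1 <= _); first by rewrite addn1 ltnS.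
by rewrite leq_add2l.
Qed.

Lemma Hdown p : 1 < H p -> exists2 q, (q < p)%O & (H p).-1 <= H q.
Proof.
case: (H_wit p) => C /andP[/andP[chC pC] /forall_inP Cp] -> hC.
have cC' : #|C :\ p| = (#|C|).-1 by rewrite (cardsD1 p C) pC.
have : 0 < #|C :\ p| by rewrite cC' -ltnS (ltn_predK hC).
case/card_gt0P => x0 x0C.
case: (@arg_maxnP _ x0 (fun x => x \in C :\ p) H x0C) => q qC qmax.
move: (qC); rewrite in_setD1 => /andP[qp qC0].
exists q; first by rewrite lt_neqAle qp Cp.
rewrite -cC'; apply: H_ge.
rewrite /below (chain_sub (subsetDl _ _) chC) qC /=.
apply/forall_inP => x xC.
have /orP [//|qx] : (x <= q)%O || (q <= x)%O.
  by move/chainP: chC; apply; [move: xC; rewrite in_setD1 => /andP[] | ].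
case: (eqVneq x q) => [-> //|xq].
have qx' : (q < x)%O by rewrite lt_neqAle eq_sym xq qx.
by move: (qmax x xC) => /=; rewrite leqNgt (H_strict qx').
Qed.

Lemma Dup p : 1 < Dp p -> exists2 q, (p < q)%O & (Dp p).-1 <= Dp q.
Proof.
case: (D_wit p) => C /andP[/andP[chC pC] /forall_inP Cp] -> hC.
have cC' : #|C :\ p| = (#|C|).-1 by rewrite (cardsD1 p C) pC.
have : 0 < #|C :\ p| by rewrite cC' -ltnS (ltn_predK hC).
case/card_gt0P => x0 x0C.
case: (@arg_maxnP _ x0 (fun x => x \in C :\ p) Dp x0C) => q qC qmax.
move: (qC); rewrite in_setD1 => /andP[qp qC0].
exists q; first by rewrite lt_neqAle eq_sym qp Cp.
rewrite -cC'; apply: D_ge.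
rewrite /above (chain_sub (subsetDl _ _) chC) qC /=.
apply/forall_inP => x xC.
have /orP [qx|//] : (x <= q)%O || (q <= x)%O.
  by move/chainP: chC; apply; [move: xC; rewrite in_setD1 => /andP[] | ].
case: (eqVneq x q) => [-> //|xq].
have qx' : (x < q)%O by rewrite lt_neqAle xq qx.
by move: (qmax x xC) => /=; rewrite leqNgt (D_strict qx').
Qed.

Definition h p := (H p).-1.

Lemma h_strict p q : (q < p)%O -> h q < h p.
Proof. move=> /H_strict; have := H_gt0 q; rewrite /h; lia. Qed.

Lemma h_le_r p : h p <= r.
Proof. have := HD p; have := D_gt0 p; rewrite /h; lia. Qed.

Definition Ik k := [set x | h x < k].

Lemma Ik_ideal k : order_ideal (Ik k).
Proof.
apply/forall_inP => x; rewrite inE => xk; apply/forallP => y; apply/implyP.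
rewrite le_eqVlt => /orP [/eqP -> | /h_strict yx]; rewrite inE //.
exact: ltn_trans yx xk.
Qed.

Lemma togp_Ik p k : togp p (Ik k) = (k == h p).
Proof.
apply/idP/eqP.
  move=> /andP [pI /forallP hq]; move: pI; rewrite inE -leqNgt => kp.
  apply/eqP; rewrite eqn_leq kp /=; rewrite leqNgt; apply/negP => kp'.
  have : 1 < H p by move: kp'; rewrite /h; lia.
  case/Hdown => q qp hpq.
  move: (hq q); rewrite qp /= inE.
  move: kp' hpq; rewrite /h; lia.
move=> ->; rewrite /togp inE ltnn /=.
by apply/forallP => q; apply/implyP => qp; rewrite inE h_strict.
Qed.

Lemma togm_Ik p k : k < r.+2 -> togm p (Ik k) = (k == (h p).+1).
Proof.
move=> kr; apply/idP/eqP.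
  move=> /andP [pI /forallP hq]; move: pI; rewrite inE => pk.
  apply/eqP; rewrite eqn_leq pk andbT.
  have HDp := HD p.
  have [D1|D1] := leqP (Dp p) 1.
    move: kr; rewrite /h; lia.
  case: (Dup D1) => q pq dq.
  move: (hq q); rewrite pq /= inE -leqNgt => kq.
  have HDq := HD q; have Dq := D_gt0 q; have Hq := H_gt0 q; have Hp := H_gt0 p.
  move: kq; rewrite /h; lia.
move=> ->; rewrite /togm inE ltnSn /=.
apply/forallP => q; apply/implyP => pq; rewrite inE -leqNgt.
exact: h_strict.
Qed.

Lemma remove_ideal (I : {set P}) p : order_ideal I -> togm p I -> order_ideal (I :\ p).
Proof.
move=> /forall_inP idI /andP [pI /forallP pmax].
apply/forall_inP => x; rewrite in_setD1 => /andP [xp xI].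
apply/forallP => y; apply/implyP => yx.
have yI : y \in I := implyP ((forallP (idI x xI)) y) yx.
rewrite in_setD1 yI andbT.
apply/eqP => yp; subst y.
have px : (p < x)%O by rewrite lt_neqAle eq_sym xp yx.
by move: (pmax x); rewrite px xI.
Qed.

Lemma ddeg_togm (I : {set P}) : order_ideal I -> ddeg I = #|[set p | togm p I]|.
Proof.
move=> idI; rewrite /ddeg.
have -> : [set K : {set P} | order_ideal K && (K \proper I) &&
      [forall L : {set P}, (order_ideal L && (K \proper L) && (L \proper I)) ==> false]]
   = [set I :\ p | p in [set p | togm p I]].
  apply/setP => K; rewrite inE; apply/idP/imsetP.
    move=> /andP [/andP [idK /properP [sKI [x0 x0I x0K]]] /forallP nomid].
    have x0D : x0 \in I :\: K by rewrite inE x0I x0K.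
    case: (@arg_maxnP _ x0 (fun x => x \in I :\: K) H x0D) => q.
    rewrite inE => /andP [qK qI] qmax.
    have tq : togm q I.
      rewrite /togm qI /=; apply/forallP => z; apply/implyP => qz.
      apply/negP => zI.
      have zK : z \notin K.
        apply/negP => zK; move: qK.
        by rewrite (implyP ((forallP ((forall_inP idK) z zK)) q) (ltW qz)).
      move: (qmax z); rewrite inE zK zI /= => /(_ isT).
      by rewrite leqNgt H_strict.
    exists q; first by rewrite inE.
    have sKq : K \subset I :\ q.
      apply/subsetP => x xK; rewrite in_setD1 (subsetP sKI x xK) andbT.
      by apply/eqP => xq; subst x; move: qK; rewrite xK.
    case: (eqVneq K (I :\ q)) => // ne.
    move: (nomid (I :\ q)); rewrite remove_ideal // properEneq ne sKq /=.
    by rewrite properD1.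
  case=> p; rewrite inE => tp ->.
  rewrite remove_ideal // properD1 /=; last by case/andP: tp.
  apply/forallP => L; apply/implyP => /andP [/andP [_ /proper_card c1] /proper_card c2].
  move: c1 c2; rewrite (cardsD1 p I); case/andP: tp => -> _; lia.
apply: card_in_imset => p q; rewrite !inE => tp tq eqpq.
case: (eqVneq p q) => // npq.
have : p \in I :\ q by rewrite in_setD1 npq; case/andP: tp.
by rewrite -eqpq in_setD1 eqxx.
Qed.
End Comb.

Local Open Scope ring_scope.

Lemma sum_ind (R : realFieldType) n m : (m < n)%N -> \sum_(k < n) ((k : nat) == m)%:R = 1 :> R.
Proof.
move=> hm; rewrite (bigD1 (Ordinal hm)) //= eqxx big1 ?addr0 // => k nk.
case: eqP => // e; move: nk; rewrite -(inj_eq val_inj) /= e eqxx //.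
Qed.

Theorem proposition3p8 (R : realFieldType) (d : Order.disp_t) (P : finPOrderType d)
    (r : nat) (hgr : graded_rank P r) (htCDE : tCDE P R) :
  expect (@uni _ P R) (fun I => (ddeg I)%:R) = (#|P|%:R / (r.+2)%:R : R).
Proof.
set c := ((r.+2)%:R : R)^-1.
pose mu : {set P} -> R := fun I => (\sum_(k < r.+2) (I == Ik P k))%:R * c.
have Emu : forall f : {set P} -> R, expect mu f = (\sum_(k < r.+2) f (Ik P k)) * c.
  move=> f; rewrite /expect.
  transitivity (\sum_(I | order_ideal I) \sum_(k < r.+2) f I * (I == Ik P k)%:R * c).
    apply: eq_bigr => I _; rewrite /mu natr_sum mulr_suml mulr_sumr.
    by apply: eq_bigr => k _; rewrite mulrA.
  rewrite exchange_big mulr_suml; apply: eq_bigr => k _.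
  rewrite (bigD1 (Ik P k)) ?Ik_ideal //= eqxx mulr1 big1 ?addr0 // => I /andP [_ ne].
  by rewrite (negbTE ne) mulr0 mul0r.
have cK : (r.+2)%:R * c = 1 by rewrite /c mulfV // pnatr_eq0.
have dmu : is_distr mu.
  split.
    by move=> I _; rewrite /mu mulr_ge0 ?ler0n // invr_ge0 ler0n.
  have := Emu (fun _ => 1); rewrite /expect.
  under eq_bigr do rewrite mul1r.
  by move=> ->; rewrite sumr_const card_ord cK.
have tmu : toggle_symmetric mu.
  move=> p; rewrite !Emu.
  rewrite (eq_bigr (fun k : 'I_r.+2 => ((k : nat) == h p)%:R)); last first.
    by move=> k _; rewrite togp_Ik.
  rewrite [in RHS](eq_bigr (fun k : 'I_r.+2 => ((k : nat) == (h p).+1)%:R)); last first.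
    by move=> k _; rewrite (togm_Ik hgr).
  have hr := h_le_r hgr p.
  rewrite sum_ind; last by apply: leq_trans hr _.
  by rewrite sum_ind.
rewrite -(htCDE mu dmu tmu) Emu; congr (_ * _).
rewrite (eq_bigr (fun k : 'I_r.+2 => \sum_(p : P) (togm p (Ik P k))%:R)); last first.
  move=> k _; rewrite ddeg_togm ?Ik_ideal // -sum1_card natr_sum big_mkcond /=.
  by apply: eq_bigr => p _; rewrite inE; case: (togm p _).
rewrite exchange_big /=.
rewrite (eq_bigr (fun _ => 1)); last first.
  move=> p _; rewrite (eq_bigr (fun k : 'I_r.+2 => ((k : nat) == (h p).+1)%:R)).
    by rewrite sum_ind // ltnS ltnS (h_le_r hgr).
  by move=> k _; rewrite (togm_Ik hgr).
by rewrite sumr_const.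
Qed.
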